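(* Let $k\geq 0$. Then \[ H_k(x)=\sum_{i=0}^{k+1}\sum_{j=0}^{2k+1}h_k(i,j)\,x^{2(k+1)i+j}, \] where $h_k(i,j)=t_k(k+1-i,\,k-j)$ for $0\leq i\leq k+1$, $0\leq j\leq k$, and $h_k(i,j)=t_k(i,\,j-k-1)$ for $0\leq i\leq k+1$, $k+1\leq j\leq 2k+1$. (That is, the $(k+2)\times 2(k+1)$ coefficient array of $H_k$ is obtained from the $(k+2)\times(k+1)$ array $t_k$ by placing a $180^\circ$ rotation of $t_k$ in front of $t_k$.)
   Context: $B_n(y)=\sum_{\pi\in B_n}y^{\mathrm{des}_B(\pi)}$ is the type $B$ Eulerian polynomial: $B_n$ is the set of signed permutations $\pi_1\cdots\pi_n$ of $[n]$, and with $\pi_0=0$, $\mathrm{des}_B(\pi)$ counts $i\in\{0,\dots,n-1\}$ with $\pi_i>\pi_{i+1}$; $B_0=1$. Define \[\widetilde T_k(x)=\sum_{l=0}^{k}B_{k-l}(x^{k+1})(x^{k+1}-1)^l\sum_{i=l}^{k}\binom{i}{l}x^{k-i},\] and for $0\le i\le k+1$, $0\le j\le k$ let $t_k(i,j)$ be the coefficient of $x^{(k+1)i+j}$ in $\widetilde T_k(x)$. Define \[H_k(x)=\sum_{l=0}^{k}B_{k-l}(x^{2k+2})(x^{2k+2}-1)^l\sum_{s=l}^{k}\binom{s}{l}x^{2k+1-s}+\sum_{l=0}^{k}B_{k-l}(x^{-2k-2})(x^{-2k-2}-1)^l\sum_{s=l}^{k}\binom{s}{l}x^{2(k+1)^2+s}.\]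 *)

(* Defs.v *)
From mathcomp Require Import all_boot all_order all_algebra all_fingroup.
Set Implicit Arguments. Unset Strict Implicit. Unset Printing Implicit Defensive.
Import Order.TTheory GRing.Theory Num.Theory.
Local Open Scope ring_scope.

(* A signed permutation of [n] is a pair (sigma, eps): pi_{i+1} = (-1)^{eps i} (sigma i + 1)
   for i : 'I_n (0-indexed positions, 1-indexed values). *)
Definition signed_perm (n : nat) := ('S_n * {ffun 'I_n -> bool})%type.

(* pi_j as an integer, with pi_0 = 0 (and 0 beyond n, never used). *)
Definition spval (n : nat) (p : signed_perm n) (j : nat) : int :=
  if j is j'.+1 then
    match (insub j' : option 'I_n) with
    | Some o => (if p.2 o then -1 else 1) * ((p.1 o).+1)%:Z
    | None => 0
    end
  else 0.

Definition desB (n : nat) (p : signed_perm n) : nat :=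
  #|[set i : 'I_n | spval p i.+1 < spval p i]|.

Definition Beul {R : comNzRingType} (n : nat) (y : R) : R :=
  \sum_(p : signed_perm n) y ^+ desB p.

Definition Ttilde (k : nat) : {poly int} :=
  \sum_(l < k.+1) Beul (k - l) ('X^(k.+1)) * ('X^(k.+1) - 1) ^+ l *
     \sum_(l <= i < k.+1) ('C(i, l))%:R * 'X^(k - i).

Definition tk (k i j : nat) : int := (Ttilde k)`_((k.+1) * i + j).

(* the indeterminate x in the field of rational functions Q(x) ⊇ Z[x, x^-1] *)
Definition xF : {fraction {poly int}} := tofrac ('X : {poly int}).

Definition Hk (k : nat) : {fraction {poly int}} :=
  \sum_(l < k.+1) Beul (k - l) (xF ^+ (2 * k + 2)) * (xF ^+ (2 * k + 2) - 1) ^+ l *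
     \sum_(l <= s < k.+1) ('C(s, l))%:R * xF ^+ (2 * k + 1 - s)
  + \sum_(l < k.+1) Beul (k - l) (xF ^- (2 * k + 2)) * (xF ^- (2 * k + 2) - 1) ^+ l *
     \sum_(l <= s < k.+1) ('C(s, l))%:R * xF ^+ (2 * (k.+1) ^ 2 + s).

Definition hk (k i j : nat) : int :=
  if (j <= k)%N then tk k (k.+1 - i) (k - j) else tk k i (j - k.+1).

(* Main.v *)
Require Import Defs.
From mathcomp Require Import all_boot all_order all_algebra all_fingroup.
From mathcomp Require Import ring zify.
Import Order.TTheory GRing.Theory Num.Theory.
Local Open Scope ring_scope.

Lemma desB_le n (p : signed_perm n) : (desB p <= n)%N.
Proof.
by rewrite /desB; apply: leq_trans (max_card _) _; rewrite card_ord.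
Qed.

Lemma size_Beul n : (size (Beul n ('X : {poly int})) <= n.+1)%N.
Proof.
rewrite /Beul; apply: leq_trans (size_sum _ _ _) _.
apply/bigmax_leqP => p _; rewrite size_polyXn ltnS; exact: desB_le.
Qed.

Definition Apoly k l : {poly int} := Beul (k - l) 'X * ('X - 1) ^+ l.
Definition cc k l a : int := (Apoly k l)`_a.

Lemma size_Apoly k l : (l <= k)%N -> (size (Apoly k l) <= k.+2)%N.
Proof.
move=> lk; rewrite /Apoly; apply: leq_trans (size_polyMleq _ _) _.
have h1 := size_Beul (k - l).
have h2 : (size (('X - 1 : {poly int}) ^+ l) <= l.+1)%N.
  by apply: leq_trans (size_poly_exp_leq _ _) _; rewrite -polyC1 size_XsubC mul1n.
rewrite -subn1 leq_subLR; apply: leq_trans (leq_add h1 h2) _; lia.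
Qed.

Lemma size_map_le (R : comNzRingType) (p : {poly int}) :
  (size (map_poly (intr : int -> R) p) <= size p)%N.
Proof. exact: size_poly. Qed.

Lemma Beul_eval (R : comNzRingType) n (y : R) :
  Beul n y = (map_poly (intr : int -> R) (Beul n 'X)).[y].
Proof.
rewrite /Beul rmorph_sum horner_sum; apply: eq_bigr => p _.
by rewrite rmorphXn /= map_polyX hornerXn.
Qed.

Lemma expand (R : comNzRingType) k l (y : R) : (l <= k)%N ->
  Beul (k - l) y * (y - 1) ^+ l = \sum_(a < k.+2) (cc k l a)%:~R * y ^+ a.
Proof.
move=> lk; rewrite Beul_eval.
have -> : (y - 1) ^+ l = (map_poly (intr : int -> R) (('X - 1) ^+ l)).[y].
  by rewrite rmorphXn rmorphB /= map_polyX rmorph1 horner_exp hornerD hornerN hornerX hornerC.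
rewrite -hornerM -rmorphM /=.
rewrite (horner_coef_wide _ (leq_trans (size_map_le _ _) (@size_Apoly k l lk))).
by apply: eq_bigr => a _; rewrite coef_map.
Qed.

Lemma enc_inj d a a' r r' : (r < d)%N -> (r' < d)%N ->
  (d * a + r == d * a' + r')%N = (a == a') && (r == r').
Proof.
move=> hr hr'; apply/eqP/andP => [E|[/eqP -> /eqP ->]] //.
have d0 : (0 < d)%N by lia.
have E1 := congr1 (divn^~ d) E; have E2 := congr1 (modn^~ d) E.
move: E1 E2 => /=; rewrite !(mulnC d) !modnMDl !modn_small // !divnMDl //.
by rewrite !divn_small // !addn0 => -> ->.
Qed.

Lemma sum_single (V : zmodType) n (j : 'I_n) (F : 'I_n -> V) :
  (forall i, i != j -> F i = 0) -> \sum_(i < n) F i = F j.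
Proof.
by move=> h; rewrite (bigD1 j) //= big1 ?addr0 // => i /h.
Qed.
Arguments sum_single {V n} j [F].
Lemma sum_from (V : zmodType) l n (F : nat -> V) : (l <= n)%N ->
  (forall i, (i < l)%N -> F i = 0) -> \sum_(l <= i < n) F i = \sum_(i < n) F i.
Proof.
move=> ln h; rewrite -(big_mkord (fun _ => true)) (@big_cat_nat _ _ _ l 0 n _ _ (leq0n l) ln) /=.
rewrite [X in X + _]big1_seq ?add0r // => i; rewrite mem_index_iota => /andP[_ /h] //.
Qed.

Lemma Ttilde_exp k : Ttilde k = \sum_(l < k.+1) \sum_(a < k.+2) \sum_(i < k.+1)
   (('C(i, l))%:R * cc k l a) *: 'X^(k.+1 * a + (k - i)).
Proof.
rewrite /Ttilde; apply: eq_bigr => l _.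
have lk : (l <= k)%N by rewrite -ltnS.
rewrite expand // sum_from ?(ltnW (ltn_ord l)) //; last first.
  by move=> i il; rewrite bin_small // mul0r.
rewrite ?ltnW // mulr_suml; apply: eq_bigr => a _; rewrite mulr_sumr; apply: eq_bigr => i _.
rewrite -mul_polyC exprD exprM polyCM.
have -> : (('C(i, l))%:R : {poly int}) = ('C(i, l))%:R%:P by rewrite rmorph_nat.
have -> : (cc k l a)%:~R = (cc k l a)%:P :> {poly int} by rewrite -(rmorph_int polyC) intz.
ring.
Qed.

Lemma tk_formula k a b : (a < k.+2)%N -> (b < k.+1)%N ->
  tk k a b = \sum_(l < k.+1) ('C(k - b, l))%:R * cc k l a.
Proof.
move=> ha hb; rewrite /tk Ttilde_exp coef_sum; apply: eq_bigr => l _.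
have hkb : (k - b < k.+1)%N by rewrite ltnS leq_subr.
have hr : forall i : 'I_k.+1, (k - i < k.+1)%N by move=> i; rewrite ltnS leq_subr.
rewrite coef_sum (sum_single (Ordinal ha)) => [|a' na]; last first.
  rewrite coef_sum big1 // => i _; rewrite coefZ coefXn.
  rewrite enc_inj ?hr //.
  have -> : (a == a') = false by move: na; rewrite -val_eqE /= eq_sym => /negbTE.
  by rewrite mulr0.
rewrite coef_sum (sum_single (Ordinal hkb)) => [|i ni]; last first.
  rewrite coefZ coefXn enc_inj ?hr // eqxx /=.
  have -> : (b == (k - i)%N) = false.
    apply/negbTE; move: ni; rewrite -val_eqE /=.
    have hi := ltn_ord i; apply: contra => /eqP E; apply/eqP; lia.
  by rewrite mulr0.
by rewrite coefZ coefXn /= subKn ?eqxx ?mulr1 // -ltnS.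
Qed.

Lemma xF_neq0 : xF != 0.
Proof. by rewrite /xF tofrac_eq0 polyX_eq0. Qed.

Lemma P1 k : \sum_(l < k.+1) Beul (k - l) (xF ^+ (2 * k + 2)) * (xF ^+ (2 * k + 2) - 1) ^+ l *
     \sum_(l <= s < k.+1) ('C(s, l))%:R * xF ^+ (2 * k + 1 - s)
 = \sum_(a < k.+2) \sum_(s < k.+1) (tk k a (k - s))%:~R * xF ^+ (2 * (k.+1) * a + (2 * k + 1 - s)).
Proof.
have e2 : (2 * k + 2 = 2 * k.+1)%N by lia.
rewrite (eq_bigr (fun l : 'I_k.+1 => \sum_(a < k.+2) \sum_(s < k.+1)
   (('C(s, l))%:R * cc k l a)%:~R * xF ^+ (2 * (k.+1) * a + (2 * k + 1 - s)))); last first.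
  move=> l _; have lk : (l <= k)%N by rewrite -ltnS.
  rewrite expand // sum_from ?(ltnW (ltn_ord l)) //; last first.
    by move=> i il; rewrite bin_small // mul0r.
  rewrite mulr_suml; apply: eq_bigr => a _; rewrite mulr_sumr; apply: eq_bigr => s _.
  have -> : xF ^+ (2 * k.+1 * a + (2 * k + 1 - s)) = (xF ^+ (2 * k + 2)) ^+ a * xF ^+ (2 * k + 1 - s) by rewrite exprD -exprM e2.
  rewrite rmorphM /= rmorph_nat; ring.
rewrite exchange_big; apply: eq_bigr => a _; rewrite exchange_big; apply: eq_bigr => s _.
have hks : (k - s < k.+1)%N by rewrite ltnS leq_subr.
rewrite (@tk_formula k a (k - s) (ltn_ord a) hks).
have hs : (s <= k)%N by rewrite -ltnS.
rewrite (subKn hs) rmorph_sum mulr_suml.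
by apply: eq_bigr => l _.

Qed.

Lemma Yinv_id k (a s : nat) : (a <= k.+1)%N ->
  (xF ^- (2 * k + 2)) ^+ a * xF ^+ (2 * (k.+1) ^ 2 + s)
  = xF ^+ (2 * (k.+1) * (k.+1 - a) + s).
Proof.
move=> ha.
have e : (2 * (k.+1) ^ 2 + s = (2 * k + 2) * a + (2 * (k.+1) * (k.+1 - a) + s))%N.
  rewrite -(subnKC ha); set b := (k.+1 - a)%N; rewrite addKn; nia.
rewrite e (exprD xF ((2 * k + 2) * a)) (exprM xF (2 * k + 2) a) exprVn mulrA mulVf ?mul1r //.
by rewrite expf_neq0 // expf_neq0 // xF_neq0.
Qed.

Lemma P2 k : \sum_(l < k.+1) Beul (k - l) (xF ^- (2 * k + 2)) * (xF ^- (2 * k + 2) - 1) ^+ l *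
     \sum_(l <= s < k.+1) ('C(s, l))%:R * xF ^+ (2 * (k.+1) ^ 2 + s)
 = \sum_(a < k.+2) \sum_(s < k.+1) (tk k a (k - s))%:~R * xF ^+ (2 * (k.+1) * (k.+1 - a) + s).
Proof.
rewrite (eq_bigr (fun l : 'I_k.+1 => \sum_(a < k.+2) \sum_(s < k.+1)
   (('C(s, l))%:R * cc k l a)%:~R * xF ^+ (2 * (k.+1) * (k.+1 - a) + s))); last first.
  move=> l _; have lk : (l <= k)%N by rewrite -ltnS.
  rewrite expand // sum_from ?(ltnW (ltn_ord l)) //; last first.
    by move=> i il; rewrite bin_small // mul0r.
  rewrite mulr_suml; apply: eq_bigr => a _; rewrite mulr_sumr; apply: eq_bigr => s _.
  have ha : (a <= k.+1)%N by rewrite -ltnS.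
  rewrite -(Yinv_id k a s ha) rmorphM /= rmorph_nat; ring.
rewrite exchange_big; apply: eq_bigr => a _; rewrite exchange_big; apply: eq_bigr => s _.
have hks : (k - s < k.+1)%N by rewrite ltnS leq_subr.
rewrite (@tk_formula k a (k - s) (ltn_ord a) hks).
have hs : (s <= k)%N by rewrite -ltnS.
rewrite (subKn hs) rmorph_sum mulr_suml.
by apply: eq_bigr => l _.
Qed.

Lemma split2 k (F : nat -> {fraction {poly int}}) :
  \sum_(j < 2 * k + 2) F j = \sum_(j < k.+1) F j + \sum_(j < k.+1) F (k.+1 + j)%N.
Proof.
have e : (2 * k + 2 = k.+1 + k.+1)%N by lia.
by rewrite e big_split_ord.
Qed.

Theorem lemma3p1 (k : nat) :
  Hk k = \sum_(i < k.+2) \sum_(j < 2 * k + 2)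
           (hk k i j)%:~R * xF ^+ (2 * (k.+1) * i + j).
Proof.
rewrite /Hk P1 P2.
rewrite [RHS](eq_bigr (fun i : 'I_k.+2 => \sum_(j < k.+1) (hk k i j)%:~R * xF ^+ (2 * (k.+1) * i + j)
   + \sum_(j < k.+1) (hk k i (k.+1 + j)%N)%:~R * xF ^+ (2 * (k.+1) * i + (k.+1 + j)%N))); last first.
  by move=> i _; rewrite (split2 k (fun j => (hk k i j)%:~R * xF ^+ (2 * (k.+1) * i + j))).
rewrite big_split /= addrC; congr (_ + _).
  apply: eq_bigr => a _; rewrite [LHS](reindex_inj rev_ord_inj) /=.
  apply: eq_bigr => s _.
  have hs := ltn_ord s.
  rewrite /hk.
  have -> : (k.+1 + s <= k)%N = false by apply/negbTE; rewrite -ltnNge; lia.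
  have -> : (k - (k.+1 - s.+1) = s)%N by lia.
  have -> : (k.+1 + s - k.+1 = s)%N by lia.
  have -> : (2 * k + 1 - (k.+1 - s.+1) = k.+1 + s)%N by lia.
  by [].
rewrite [LHS](reindex_inj rev_ord_inj) /=.
apply: eq_bigr => a _; apply: eq_bigr => s _.
have ha := ltn_ord a; have hs := ltn_ord s.
rewrite /hk.
have -> : (s <= k)%N by rewrite -ltnS.
have -> : (k.+2 - a.+1 = k.+1 - a)%N by lia.
have -> : (k.+1 - (k.+1 - a) = a)%N by lia.
by [].
Qed.
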